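(* We have $$\limsup_{m\to\infty}\frac{b_m\,\log\log\log m}{\log\log m}\ge 8;$$ in particular the sequence $(b_m)_{m\ge1}$ is unbounded.
   Context: For $n\ge 1$, $\phi_n(X)$ is the $n$-th cyclotomic polynomial (degree $\varphi(n)$, Euler's totient), and $\Phi_n(X,Y)=Y^{\varphi(n)}\phi_n(X/Y)$. For an integer $m\ge1$, $b_m$ is the number of triples $(n,x,y)\in\mathbb Z^3$ with $\varphi(n)>2$, $\max\{|x|,|y|\}\ge2$ and $\Phi_n(x,y)=m$. *)

(* Defs.v *)
From HB Require Import structures.
From mathcomp Require Import all_boot all_order all_algebra all_field.
Set Implicit Arguments. Unset Strict Implicit. Unset Printing Implicit Defensive.
Import GRing.Theory Num.Theory.
Local Open Scope ring_scope.

(* Homogenized cyclotomic form Phi_n(X,Y) = Y^{phi(n)} phi_n(X/Y), evaluated at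
   integers x, y:  sum_{i=0}^{phi(n)} c_i x^i y^{phi(n)-i}, where c_i are the
   coefficients of the n-th cyclotomic polynomial 'Phi_n (degree totient n). *)
Definition PhiH (n : nat) (x y : int) : int :=
  \sum_(i < (totient n).+1) ('Phi_n)`_i * x ^+ i * y ^+ (totient n - i)%N.

Definition is_sol (m : nat) (t : nat * int * int) : bool :=
  let '(n, x, y) := t in
  [&& (2 < totient n)%N, (2 <= maxn `|x|%N `|y|%N)%N & PhiH n x y == m%:Z].

(* b_ge m k  <->  b_m >= k : there are at least k distinct triples counted by b_m. *)
Definition b_ge (m k : nat) : Prop :=
  exists s : seq (nat * int * int), [/\ uniq s, size s = k & all (is_sol m) s].

(* Main.v *)
Require Import Defs.
From Stdlib Require Import Reals Lia Lra.
From mathcomp Require all_boot all_order all_algebra all_field.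
From mathcomp Require zify ring.
Module H.
Import all_boot all_order all_algebra all_field zify ring.
Import GRing.Theory Num.Theory.
Local Open Scope ring_scope.

Lemma expn_pow m n : (m ^ n)%N = Nat.pow m n.
Proof. elim: n => [|n IH] //; by rewrite expnS IH. Qed.

Lemma Phi2pow j : 'Phi_(2 ^ j.+1) = 'X^(2 ^ j) + 1.
Proof.
have h := prod_Cyclotomic (expn_gt0 2 j.+1).
have h' := prod_Cyclotomic (expn_gt0 2 j).
have perm: perm_eq (divisors (2 ^ j.+1)%N) ((2 ^ j.+1)%N :: divisors (2 ^ j)%N).
  apply: uniq_perm; first exact: divisors_uniq.
    by rewrite /= divisors_uniq andbT -dvdn_divisors ?expn_gt0 // dvdn_Pexp2l // ltnn.
  move=> d; rewrite inE -!dvdn_divisors ?expn_gt0 //.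
  apply/idP/idP.
    case/(dvdn_pfactor _ _ (isT : prime 2)) => e le_e ->.
    rewrite leq_eqVlt in le_e; case/orP: le_e => [/eqP->|lt]; first by rewrite eqxx.
    by rewrite dvdn_Pexp2l // -ltnS lt orbT.
  case/orP => [/eqP->//|hd]; exact: dvdn_trans hd (dvdn_exp2l 2 (leqnSn j)).
rewrite (perm_big _ perm) big_cons h' /= in h.
have nz : ('X^(2 ^ j) - 1 : {poly int}) != 0.
  by apply: monic_neq0; apply: monic_Xn_sub_1; rewrite expn_gt0.
apply: (mulIf nz); rewrite h expnS mul2n -addnn exprD.
ring.
Qed.

Lemma PhiH_y1 n x : PhiH n x 1 = ('Phi_n).[x].
Proof.
rewrite /PhiH horner_coef size_Cyclotomic; apply: eq_bigr => i _.
by rewrite expr1n mulr1.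
Qed.

Lemma sol j K : (2 <= j <= K)%N ->
  is_sol (2 ^ (2 ^ K) + 1)%N ((2 ^ j.+1)%N, (2 ^ (2 ^ (K - j)))%N%:Z, 1).
Proof.
case/andP => j2 jK.
rewrite /is_sol totient_pfactor // /= mul1n.
apply/and3P; split.
- by rewrite (ltn_exp2l 1 j (isT : 1 < 2)%N).
- apply: leq_trans (leq_maxl _ _).
  apply: (@leq_pexp2l 2 1) => //; by rewrite expn_gt0.
- rewrite PhiH_y1 Phi2pow hornerD hornerXn hornerC -natz -natrX -expnM -expnD subnK //.
  by rewrite natz.
Qed.

Lemma bge K : b_ge (Nat.add (Nat.pow 2 (Nat.pow 2 K)) 1) (Nat.pred K).
Proof.
rewrite -!expn_pow.
exists [seq ((2 ^ j.+1)%N, (2 ^ (2 ^ (K - j)))%N%:Z, 1) | j <- iota 2 K.-1].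
split.
- rewrite map_inj_uniq ?iota_uniq // => a b [] /(expnI (isT : 1 < 2)%N) [].
  done.
- by rewrite size_map size_iota.
- apply/allP => t /mapP [j hj ->]; apply: sol.
  rewrite mem_iota in hj; apply/andP; lia.
Qed.
End H.
Open Scope R_scope.
Lemma lnle x y : 0 < x -> x <= y -> ln x <= ln y.
Proof.
intros hx hxy. destruct (Rle_lt_or_eq_dec _ _ hxy) as [h|h].
- left. now apply ln_increasing.
- rewrite h. lra.
Qed.

Lemma ln2_bounds : / 2 <= ln 2 <= 1.
Proof.
split.
- pose proof ln_lt_2. lra.
- rewrite <- (ln_exp 1). apply lnle; [lra|]. 
  pose proof (exp_ineq1 1). assert (1 <> 0) by lra. specialize (H H0). lra.
Qed.

Lemma ln3 : 1 <= ln 3.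
Proof. rewrite <- (ln_exp 1). apply lnle. apply exp_pos. apply exp_le_3. Qed.

Lemma real_part K : 65536 <= INR K ->
  INR (Nat.pred K) * ln (ln (ln (INR (Nat.add (Nat.pow 2 (Nat.pow 2 K)) 1))))
   / ln (ln (INR (Nat.add (Nat.pow 2 (Nat.pow 2 K)) 1))) >= 8.
Proof.
intros HK.
destruct K as [|K']. { simpl in HK. lra. }
set (K := S K') in *.
pose proof ln2_bounds as [l2a l2b].
set (e := Nat.pow 2 K).
assert (He : INR e = 2 ^ K). { unfold e. rewrite pow_INR. reflexivity. }
assert (HKp : 2 ^ K = 2 * 2 ^ K'). { reflexivity. }
assert (p1 : 1 <= 2 ^ K'). { apply pow_R1_Rle. lra. }
assert (p1' : 1 <= 2 ^ e). { apply pow_R1_Rle. lra. }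
assert (HM : INR (Nat.add (Nat.pow 2 e) 1) = 2 ^ e + 1).
{ rewrite plus_INR, pow_INR. replace (INR 2) with 2 by (simpl; lra). simpl INR. lra. }
rewrite HM. set (L := ln (2 ^ e + 1)).
assert (La : INR e * ln 2 <= L).
{ unfold L. rewrite <- ln_pow by lra. apply lnle. apply pow_lt; lra. lra. }
assert (Lb : L <= INR (S e) * ln 2).
{ unfold L. rewrite <- ln_pow by lra. apply lnle. lra. simpl. lra. }
rewrite S_INR in Lb.
assert (La' : 2 ^ K' <= L) by nra.
assert (Lb' : L <= 2 ^ (S K)).
{ simpl. rewrite He in Lb. nra. }
set (L1 := ln L).
assert (L1a : INR K' * ln 2 <= L1).
{ unfold L1. rewrite <- ln_pow by lra. apply lnle. apply pow_lt; lra. lra. }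
assert (L1b : L1 <= INR (S K) * ln 2).
{ unfold L1. rewrite <- ln_pow by lra. apply lnle. lra. lra. }
assert (HK' : 65535 <= INR K'). { unfold K in HK. rewrite S_INR in HK. lra. }
assert (L1c : 3 ^ 9 <= L1). { simpl. nra. }
assert (L2 : 9 <= ln L1).
{ apply Rle_trans with (ln (3 ^ 9)). rewrite ln_pow by lra. 
  pose proof ln3. simpl INR. lra.
  apply lnle. apply pow_lt; lra. exact L1c. }
assert (L1d : L1 <= INR K' + 2).
{ unfold K in L1b. rewrite !S_INR in L1b. nra. }
simpl Nat.pred.
assert (L1pos : 0 < L1) by (simpl in L1c; lra).
apply Rle_ge. unfold Rdiv.
apply (Rmult_le_reg_r L1); [exact L1pos|].
rewrite Rmult_assoc, Rinv_l by lra. nra.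
Qed.

Lemma big_m N K : (N <= K)%nat -> (N <= Nat.add (Nat.pow 2 (Nat.pow 2 K)) 1)%nat.
Proof.
intros h.
pose proof (Nat.pow_gt_lin_r 2 K ltac:(lia)).
pose proof (Nat.pow_gt_lin_r 2 (Nat.pow 2 K) ltac:(lia)).
lia.
Qed.

Lemma one_m K : (1 <= Nat.add (Nat.pow 2 (Nat.pow 2 K)) 1)%nat.
Proof. lia. Qed.

Lemma HKlem N : 65536 <= INR (N + Nat.pow 2 16).
Proof.
rewrite plus_INR, pow_INR. pose proof (pos_INR N).
replace (INR 2) with 2 by (simpl; lra).
replace (2 ^ 16) with 65536 by (simpl; lra). lra.
Qed.

Theorem lemma1p5 :
  (forall eps : R, 0 < eps -> forall N : nat,
     exists m k : nat, (N <= m)%nat /\ b_ge m k /\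
       INR k * ln (ln (ln (INR m))) / ln (ln (INR m)) >= 8 - eps)
  /\ (forall B : nat, exists m : nat, (1 <= m)%nat /\ b_ge m B).
Proof.
split.
- intros eps heps N.
  exists (Nat.add (Nat.pow 2 (Nat.pow 2 (N + Nat.pow 2 16))) 1), (Nat.pred (N + Nat.pow 2 16)).
  split; [|split].
  + apply big_m. apply Nat.le_add_r.
  + apply H.bge.
  + pose proof (real_part _ (HKlem N)). lra.
- intros B. exists (Nat.add (Nat.pow 2 (Nat.pow 2 (S B))) 1).
  split; [apply one_m|]. exact (H.bge (S B)).
Qed.
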